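(* Let $q\ge2$ and let $U$ be a $q\times q$ row-stochastic matrix with strictly positive entries. There is a constant $C_3$ independent of $n$ such that for all sufficiently large $n$, every $\mathbf{x}\in[1:q]^n$ and every $a\ne b\in[1:q]$, $$d_{\mathrm{TV}}\big(W_{(\mathbf{x},a)},W_{(\mathbf{x},b)}\big)\le\frac{C_3(\log n)^{(q-2)/2}}{\sqrt n}.$$
   Context: For a vector $\mathbf{x}\in[1:q]^m$, $W_{\mathbf{x}}$ denotes the distribution of the composition $(N(1|\mathbf{Y}),\dots,N(q|\mathbf{Y}))$, $N(c|\mathbf{Y})=|\{i:Y_i=c\}|$, of the output $\mathbf{Y}$ when $\mathbf{x}$ is sent through $m$ independent uses of the DMC $U$ (i.e. $\Pr[\mathbf{Y}=\mathbf{y}]=\prod_iU(y_i|x_i)$). $(\mathbf{x},a)\in[1:q]^{n+1}$ denotes $\mathbf{x}$ with the symbol $a$ appended. $d_{\mathrm{TV}}(P,Q)=\frac12\sum|P-Q|$. Logarithms base 2. *)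

(* Defs.v *)
From HB Require Import structures.
From mathcomp Require Import all_boot all_order all_algebra.
From mathcomp Require Import reals exp.
Set Implicit Arguments. Unset Strict Implicit. Unset Printing Implicit Defensive.
Import Order.TTheory GRing.Theory Num.Theory.
Local Open Scope ring_scope.

Section Defs.
Variable R : realType.
Variable q : nat.
Variable U : 'M[R]_q.  (* U i j = U(j | i): transition probability input i -> output j *)

Definition chan_prob (m : nat) (x y : m.-tuple 'I_q) : R :=
  \prod_(i < m) U (tnth x i) (tnth y i).

Definition composition (m : nat) (y : m.-tuple 'I_q) (c : 'I_q) : nat :=
  count_mem c y.

Definition W (m : nat) (x : m.-tuple 'I_q) (k : 'I_q -> nat) : R :=
  \sum_(y : m.-tuple 'I_q | [forall c, composition y c == k c]) chan_prob x y.

(* total variation distance between W_x and W_x'; every composition of a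
   length-m word has all counts <= m, so summing over k : 'I_q -> 'I_(m.+1)
   covers the whole support. *)
Definition dTV_W (m : nat) (x x' : m.-tuple 'I_q) : R :=
  2^-1 * \sum_(k : {ffun 'I_q -> 'I_(m.+1)})
           `|W x (fun c => nat_of_ord (k c)) - W x' (fun c => nat_of_ord (k c))|.
End Defs.

Definition log2 {R : realType} (x : R) : R := ln x / ln 2.

(* Main.v *)
Require Import Defs.
From HB Require Import structures.
From mathcomp Require Import all_boot all_order all_algebra.
From mathcomp Require Import reals exp.
From mathcomp Require Import ring lra.
Import Order.TTheory GRing.Theory Num.Theory.
Local Open Scope ring_scope.
Set Implicit Arguments. Unset Strict Implicit. Unset Printing Implicit Defensive.
Definition norm1 {R : realType} (p : {poly R}) : R := \sum_(i < size p) `|p`_i|.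

Lemma norm1_widen {R : realType} (p : {poly R}) N : (size p <= N)%N ->
  norm1 p = \sum_(i < N) `|p`_i|.
Proof.
move=> hN; rewrite /norm1 (big_ord_widen N (fun i => `|p`_i|) hN).
rewrite big_mkcond /=; apply: eq_bigr => i _.
by case: ifP => // /negbT; rewrite -leqNgt => h; rewrite nth_default // normr0.
Qed.

Lemma norm1_ge0 {R : realType} (p : {poly R}) : 0 <= norm1 p.
Proof. by apply: sumr_ge0 => i _. Qed.

Lemma norm1D {R : realType} (p q : {poly R}) : norm1 (p + q) <= norm1 p + norm1 q.
Proof.
set N := maxn (size p) (size q).
rewrite (norm1_widen (p:=p+q) (N:=N)); last by apply: (leq_trans (size_polyD _ _)).
rewrite (norm1_widen (p:=p) (N:=N)) ?leq_maxl // (norm1_widen (p:=q) (N:=N)) ?leq_maxr //.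
rewrite -big_split /=; apply: ler_sum => i _; rewrite coefD; exact: ler_normD.
Qed.

Lemma norm1Z {R : realType} (c : R) (p : {poly R}) : norm1 (c *: p) = `|c| * norm1 p.
Proof.
rewrite (norm1_widen (p:=c *: p) (N:=size p)) ?size_scale_leq //.
rewrite /norm1 mulr_sumr; apply: eq_bigr => i _; by rewrite coefZ normrM.
Qed.

Lemma norm1N {R : realType} (p : {poly R}) : norm1 (- p) = norm1 p.
Proof. by rewrite -scaleN1r norm1Z normrN normr1 mul1r. Qed.

Lemma norm1B {R : realType} (p q : {poly R}) : norm1 (p - q) <= norm1 p + norm1 q.
Proof. by rewrite -(norm1N q); apply: norm1D. Qed.

Lemma norm1_sum {R : realType} (I : Type) (r : seq I) (P : pred I) (F : I -> {poly R}) :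
  norm1 (\sum_(i <- r | P i) F i) <= \sum_(i <- r | P i) norm1 (F i).
Proof.
elim/big_ind2: _ => //.
  by rewrite /norm1 size_poly0 big_ord0.
move=> x1 x2 y1 y2 h1 h2; apply: (le_trans (norm1D _ _)); exact: lerD.
Qed.

Lemma norm1MXn {R : realType} (p : {poly R}) k : norm1 (p * 'X^k) = norm1 p.
Proof.
rewrite (norm1_widen (p:=p * 'X^k) (N:=k + size p)); last first.
  apply: (leq_trans (size_polyMleq _ _)); rewrite size_polyXn addnS /= addnC //.
rewrite big_split_ord /= big1 ?add0r; last by move=> i _; rewrite coefMXn ltn_ord normr0.
by apply: eq_bigr => i _; rewrite coefMXn /= ltnNge leq_addr /= addKn.
Qed.

Lemma norm1Xn {R : realType} k : norm1 ('X^k : {poly R}) = 1.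
Proof. by rewrite -(mul1r 'X^k) norm1MXn /norm1 size_poly1 big_ord1 coefC /= normr1. Qed.

Lemma norm1M {R : realType} (p q : {poly R}) : norm1 (p * q) <= norm1 p * norm1 q.
Proof.
rewrite -[q in p * q]coefK poly_def mulr_sumr.
apply: (le_trans (norm1_sum _ _ _)).
rewrite [norm1 q]/norm1 mulr_sumr; apply: ler_sum => i _.
rewrite -scalerAr norm1Z norm1MXn mulrC //.
Qed.

Definition nonneg {R : realType} (p : {poly R}) := forall i, 0 <= p`_i.

Lemma norm1_nonneg {R : realType} (p : {poly R}) : nonneg p -> norm1 p = p.[1].
Proof.
move=> h; rewrite horner_coef /norm1; apply: eq_bigr => i _.
by rewrite expr1n mulr1 ger0_norm.
Qed.

Lemma nonnegD {R : realType} (p q : {poly R}) : nonneg p -> nonneg q -> nonneg (p + q).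
Proof. by move=> hp hq i; rewrite coefD addr_ge0. Qed.

Lemma nonnegM {R : realType} (p q : {poly R}) : nonneg p -> nonneg q -> nonneg (p * q).
Proof. by move=> hp hq i; rewrite coefM; apply: sumr_ge0 => j _; rewrite mulr_ge0. Qed.

Lemma nonnegZX {R : realType} (c : R) k : 0 <= c -> nonneg (c *: 'X^k : {poly R}).
Proof. by move=> hc i; rewrite coefZ coefXn mulr_ge0 // ler0n. Qed.

Lemma nonneg_sum {R : realType} (I : Type) (r : seq I) (P : pred I) (F : I -> {poly R}) :
  (forall i, P i -> nonneg (F i)) -> nonneg (\sum_(i <- r | P i) F i).
Proof.
move=> h; elim/big_ind: _ => //; last exact: nonnegD.
by move=> i; rewrite coef0.
Qed.

Lemma nonnegC {R : realType} (c : R) : 0 <= c -> nonneg c%:P.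
Proof. by move=> hc i; rewrite coefC; case: (i == 0)%N. Qed.
Fixpoint hh {R : realType} (r : nat -> {poly R}) (n s : nat) : {poly R} :=
  match n with
  | 0 => (s == 0)%:R
  | n'.+1 => (if s is s'.+1 then hh r n' s' else 0) + hh r n' s * r n'
  end.

Lemma hh_gt {R : realType} (r : nat -> {poly R}) n s : (n < s)%N -> hh r n s = 0.
Proof.
elim: n s => [|n IH] [|s] //= h.
by rewrite (IH s h) (IH s.+1 (ltnW h)) mul0r addr0.
Qed.

Lemma hh_expand {R : realType} (A : {poly R}) (r : nat -> {poly R}) n :
  \prod_(i < n) (A + r i) = \sum_(s < n.+1) A ^+ s * hh r n s.
Proof.
elim: n => [|n IH].
  by rewrite big_ord0 big_ord1 /= expr0 mul1r.
rewrite big_ord_recr /= IH.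
transitivity (\sum_(s < n.+2) A ^+ s * (if nat_of_ord s is s'.+1 then hh r n s' else 0)
   + \sum_(s < n.+2) A ^+ s * (hh r n s * r n)); last first.
  by rewrite -big_split /=; apply: eq_bigr => s _; rewrite mulrDr.
rewrite [X in _ = X + _]big_ord_recl /= mulr0 add0r.
rewrite [X in _ = _ + X]big_ord_recr /= hh_gt // mul0r mulr0 addr0.
rewrite mulrDr mulr_suml mulr_suml; congr (_ + _).
  by apply: eq_bigr => s _; rewrite /bump /= !add1n add0n exprS; ring.
by apply: eq_bigr => s _; rewrite mulrA.
Qed.

Lemma hh_nonneg {R : realType} (r : nat -> {poly R}) n s :
  (forall i, nonneg (r i)) -> nonneg (hh r n s).
Proof.
move=> hr; elim: n s => [|n IH] s /=.
  by rewrite -polyC_natr; apply: nonnegC; exact: ler0n.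
apply: nonnegD; last exact: nonnegM.
by case: s => [|s] //; move=> i; rewrite coef0.
Qed.

Lemma hh_eval {R : realType} (r : nat -> {poly R}) (t : R) n s :
  (forall i, (r i).[1] = t) -> (hh r n s).[1] = 'C(n, s)%:R * t ^+ (n - s).
Proof.
move=> hr; elim: n s => [|n IH] s /=.
  by case: s => [|s] /=; rewrite hornerC ?mul1r ?mul0r.
rewrite hornerD hornerM hr.
case: s => [|s].
  by rewrite hornerC add0r IH !bin0 !mul1r subn0 exprS mulrC.
rewrite !IH binS natrD subSS.
case: (ltnP s n) => hs.
  have e : (n - s = (n - s.+1).+1)%N by rewrite subnSK.
  rewrite e exprS; ring.
by rewrite (@bin_small n s.+1) ?ltnS //; ring.
Qed.
Lemma sum_bin_uv {T : comPzRingType} (u v : T) s :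
  \sum_(j < s.+2) (u ^+ j * v ^+ (s.+1 - j)) *+ 'C(s.+1, j) = (u + v) ^+ s.+1.
Proof. by rewrite addrC exprDn; apply: eq_bigr => j _; rewrite mulrC. Qed.

Lemma sum_jbin_uv {T : comPzRingType} (u v : T) s :
  \sum_(j < s.+2) (u ^+ j * v ^+ (s.+1 - j)) *+ (j * 'C(s.+1, j)) = (u * (u + v) ^+ s) *+ s.+1.
Proof.
rewrite big_ord_recl /= mul0n mulr0n add0r.
rewrite addrC exprDn mulr_sumr -sumrMnl; apply: eq_bigr => i _.
rewrite /bump /= add1n -(mul_bin_diag s.+1) mulnC mulrnA subSS exprS; congr (_ *+ _).
rewrite /= !mulrnAr; congr (_ *+ _); by rewrite -mulrA [X in _ * X]mulrC.
Qed.

Definition cc {R : realType} (s j : nat) : R := 'C(s.+1, j)%:R * (2 * j%:R - s.+1%:R).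

Lemma cc_identity {R : realType} (u v : {poly R}) s :
  (s.+1)%:R *: ((u - v) * (u + v) ^+ s) =
  \sum_(j < s.+2) cc s j *: (u ^+ j * v ^+ (s.+1 - j)).
Proof.
have e1 : \sum_(j < s.+2) ('C(s.+1, j)%:R : R) *: (u ^+ j * v ^+ (s.+1 - j)) = (u + v) ^+ s.+1.
  by rewrite -sum_bin_uv; apply: eq_bigr => j _; rewrite scaler_nat.
have e2 : \sum_(j < s.+2) ((j * 'C(s.+1, j))%:R : R) *: (u ^+ j * v ^+ (s.+1 - j))
     = (s.+1)%:R *: (u * (u + v) ^+ s).
  by rewrite scaler_nat -sum_jbin_uv; apply: eq_bigr => j _; rewrite scaler_nat.
have -> : \sum_(j < s.+2) cc s j *: (u ^+ j * v ^+ (s.+1 - j)) =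
   2%:R *: \sum_(j < s.+2) ((j * 'C(s.+1, j))%:R : R) *: (u ^+ j * v ^+ (s.+1 - j))
   - (s.+1)%:R *: \sum_(j < s.+2) ('C(s.+1, j)%:R : R) *: (u ^+ j * v ^+ (s.+1 - j)).
  rewrite !scaler_sumr -sumrB; apply: eq_bigr => j _.
  by rewrite !scalerA -scalerBl /cc natrM; congr (_ *: _); ring.
rewrite e1 e2 scalerA exprS -!mul_polyC polyCM !polyC_natr; ring.
Qed.

Lemma norm1_uv {R : realType} (a b s : nat) :
  norm1 (('X^a - 'X^b) * ('X^a + 'X^b) ^+ s : {poly R}) * (s.+1)%:R
    <= \sum_(j < s.+2) `|cc s j : R|.
Proof.
rewrite mulrC -(ger0_norm (ler0n R s.+1)) -norm1Z cc_identity.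
apply: (le_trans (norm1_sum _ _ _)); apply: ler_sum => j _.
by rewrite norm1Z -!exprM -exprD norm1Xn mulr1.
Qed.
Lemma pascal_sum {R : realType} N (f : nat -> R) :
  \sum_(j < N.+2) 'C(N.+1, j)%:R * f j = \sum_(j < N.+1) 'C(N, j)%:R * (f j + f j.+1).
Proof.
rewrite big_ord_recl /= bin0 mul1r.
under eq_bigr do rewrite /bump /= add1n binS natrD mulrDl.
rewrite big_split /= addrA.
under [X in _ = X]eq_bigr do rewrite mulrDr.
rewrite big_split /=; congr (_ + _).
rewrite [X in _ = X]big_ord_recl bin0 mul1r; congr (_ + _).
rewrite [X in X = _]big_ord_recr /= bin_small // mulr0n mul0r addr0.
by apply: eq_bigr => i _; rewrite /bump /= add1n.
Qed.

Lemma sum_binR {R : realType} N : \sum_(j < N.+1) ('C(N, j)%:R : R) = 2 ^+ N.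
Proof.
elim: N => [|N IH]; first by rewrite big_ord1 bin0 expr0.
have := pascal_sum N (fun _ => 1 : R); under eq_bigr do rewrite mulr1.
move=> ->.
transitivity (2 * \sum_(j < N.+1) ('C(N, j)%:R : R)); last by rewrite IH exprS.
by rewrite mulr_sumr; apply: eq_bigr => j _; ring.
Qed.

Lemma sum_binvar {R : realType} N :
  \sum_(j < N.+1) 'C(N, j)%:R * (2 * j%:R - N%:R) ^+ 2 = N%:R * 2 ^+ N :> R.
Proof.
elim: N => [|N IH]; first by rewrite big_ord1 bin0 /=; ring.
rewrite (pascal_sum N (fun j : nat => (2 * j%:R - (N.+1)%:R) ^+ 2 : R)).
transitivity (\sum_(j < N.+1) (2 * ('C(N, j)%:R * (2 * j%:R - N%:R) ^+ 2) + 2 * ('C(N, j)%:R : R))).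
  apply: eq_bigr => j _; rewrite -!natr1; ring.
rewrite big_split /= -!mulr_sumr IH sum_binR -natr1 exprS; ring.
Qed.

Lemma binom_sum {R : realType} (a b : R) n :
  \sum_(s < n.+1) 'C(n, s)%:R * a ^+ s * b ^+ (n - s) = (a + b) ^+ n.
Proof.
rewrite addrC exprDn; apply: eq_bigr => s _.
by rewrite -mulr_natl; ring.
Qed.

Lemma binom_inv_sum {R : realType} (a b : R) n : 0 < a -> 0 <= b -> a + b = 1 ->
  \sum_(s < n.+1) 'C(n, s)%:R * a ^+ s * b ^+ (n - s) / (s.+1)%:R <= ((n.+1)%:R * a)^-1.
Proof.
move=> ha hb hab.
have hn : 0 < (n.+1)%:R * a :> R by rewrite mulr_gt0 // ltr0Sn.
rewrite -(ler_pM2l hn) mulfV ?gt_eqF // mulr_sumr.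
have := binom_sum a b n.+1; rewrite hab expr1n big_ord_recl /= => e.
have : \sum_(i < n.+1) 'C(n.+1, bump 0 i)%:R * a ^+ bump 0 i * b ^+ (n.+1 - bump 0 i) <= 1.
  rewrite -[X in _ <= X]e; apply: ler_wpDl => //; rewrite bin0 mul1r expr0 mul1r; exact: exprn_ge0.
move=> H; apply: (le_trans _ H); apply: ler_sum => s _; rewrite le_eqVlt; apply/orP; left; apply/eqP.
have h := mul_bin_diag n.+1 s; rewrite /= in h.
have hC : ('C(n.+1, s.+1)%:R : R) = (n.+1)%:R * 'C(n,s)%:R / (s.+1)%:R.
  rewrite -natrM h natrM; field; by rewrite nat1r pnatr_eq0.
rewrite /bump /= ?add1n subSS hC exprS; field; by rewrite nat1r pnatr_eq0.
Qed.
Lemma amgm_aux {R : realType} (x t : R) : 0 < t -> x <= (t * x ^+ 2 + t^-1) / 2.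
Proof.
move=> ht.
have -> : (t * x ^+ 2 + t^-1) / 2 = x + (t * x - 1) ^+ 2 / (2 * t).
  by field; rewrite ?mulf_neq0 ?gt_eqF.
rewrite lerDl; apply: divr_ge0; first exact: sqr_ge0.
by rewrite mulr_ge0 // ltW.
Qed.

Lemma inner_bound {R : realType} s (t : R) : 0 < t ->
  (\sum_(j < s.+2) `|cc s j : R|) / (s.+1)%:R <= 2 ^+ s * (t / (s.+1)%:R + t^-1).
Proof.
move=> ht.
have hS : 0 < (s.+1)%:R :> R by rewrite ltr0Sn.
rewrite mulr_suml.
apply: (le_trans (y := \sum_(j < s.+2) 'C(s.+1, j)%:R *
      (t * ((2 * j%:R - s.+1%:R) / s.+1%:R) ^+ 2 + t^-1) / 2)).
  apply: ler_sum => j _.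
  rewrite /cc normrM ger0_norm ?ler0n // -mulrA -mulrA ler_wpM2l ?ler0n //.
  have := amgm_aux (`|2 * j%:R - s.+1%:R| / s.+1%:R) ht.
  by rewrite expr_div_n real_normK ?num_real // -expr_div_n.
have E : \sum_(j < s.+2) 'C(s.+1, j)%:R *
      (t * ((2 * j%:R - s.+1%:R) / s.+1%:R) ^+ 2 + t^-1) / 2 =
   t / (s.+1%:R) ^+ 2 / 2 * \sum_(j < s.+2) 'C(s.+1, j)%:R * (2 * j%:R - s.+1%:R) ^+ 2
   + t^-1 / 2 * \sum_(j < s.+2) ('C(s.+1, j)%:R : R).
  rewrite !mulr_sumr -big_split; apply: eq_bigr => j _ /=.
  by field; rewrite gt_eqF // nat1r pnatr_eq0.
rewrite E sum_binvar sum_binR le_eqVlt; apply/orP; left; apply/eqP.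
rewrite [2 ^+ s.+1]exprS; field; by rewrite gt_eqF // nat1r pnatr_eq0.
Qed.

Lemma outer_bound {R : realType} n (d t : R) : 0 < d -> 0 <= 1 - 2 * d -> 0 < t ->
  \sum_(s < n.+1) d ^+ s * (2 ^+ s * (t / (s.+1)%:R + t^-1)) * ('C(n, s)%:R * (1 - 2 * d) ^+ (n - s))
    <= t * ((n.+1)%:R * (2 * d))^-1 + t^-1.
Proof.
move=> hd hb ht.
have E : \sum_(s < n.+1) d ^+ s * (2 ^+ s * (t / (s.+1)%:R + t^-1)) * ('C(n, s)%:R * (1 - 2 * d) ^+ (n - s))
   = t * \sum_(s < n.+1) 'C(n, s)%:R * (2 * d) ^+ s * (1 - 2 * d) ^+ (n - s) / (s.+1)%:R
     + t^-1 * \sum_(s < n.+1) 'C(n, s)%:R * (2 * d) ^+ s * (1 - 2 * d) ^+ (n - s).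
  rewrite !mulr_sumr -big_split; apply: eq_bigr => s _ /=.
  rewrite exprMn; field; by rewrite gt_eqF // nat1r pnatr_eq0.
rewrite E binom_sum (_ : 2 * d + (1 - 2 * d) = 1) ?expr1n ?mulr1; last by ring.
rewrite lerD2r; apply: ler_wpM2l; first exact: ltW.
apply: binom_inv_sum => //; first by rewrite mulr_gt0.
by ring.
Qed.
Lemma main_poly {R : realType} n (d t : R) a b (g : nat -> {poly R}) :
  0 < d -> 0 < t ->
  (forall i, nonneg (g i - d *: ('X^a + 'X^b))) -> (forall i, (g i).[1] = 1) ->
  norm1 (('X^a - 'X^b) * \prod_(i < n) g i) <= t * ((n.+1)%:R * (2 * d))^-1 + t^-1.
Proof.
move=> hd ht hnn hg1.
set r := fun i => g i - d *: ('X^a + 'X^b).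
have gi : forall i, g i = d *: ('X^a + 'X^b) + r i by move=> i; rewrite /r addrC subrK.
have r1 : forall i, (r i).[1] = 1 - 2 * d.
  by move=> i; rewrite /r hornerD hornerN hornerZ hornerD !hornerXn !expr1n hg1; ring.
have hb : 0 <= 1 - 2 * d.
  rewrite -(r1 0%N) -norm1_nonneg; [exact: norm1_ge0 | exact: hnn].
under eq_bigr do rewrite gi.
rewrite hh_expand mulr_sumr.
apply: (le_trans (norm1_sum _ _ _)).
apply: (le_trans _ (outer_bound n hd hb ht)).
apply: ler_sum => s _.
rewrite [X in norm1 X]mulrA.
apply: (le_trans (norm1M _ _)).
rewrite [norm1 (hh _ _ _)]norm1_nonneg; last by apply: hh_nonneg => i; exact: hnn.
rewrite (hh_eval _ _ r1); apply: ler_wpM2r; first by rewrite mulr_ge0 ?ler0n ?exprn_ge0.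
rewrite exprZn -scalerAr norm1Z ger0_norm; last by rewrite exprn_ge0 // ltW.
apply: ler_wpM2l; first by rewrite exprn_ge0 // ltW.
apply: (le_trans _ (inner_bound s ht)).
rewrite ler_pdivlMr ?ltr0Sn //; exact: norm1_uv.
Qed.
Definition codeK {q : nat} (B : nat) (k : 'I_q -> nat) : nat := (\sum_(c : 'I_q) k c * B ^ c)%N.

Lemma codeK_inj (B : nat) (q : nat) (k1 k2 : 'I_q -> nat) : (0 < B)%N ->
  (forall c, k1 c < B)%N -> (forall c, k2 c < B)%N -> codeK B k1 = codeK B k2 ->
  forall c, k1 c = k2 c.
Proof.
move=> hB; elim: q k1 k2 => [|q IH] k1 k2 h1 h2 e c; first by case: c.
have split : forall k : 'I_q.+1 -> nat, codeK B k = (k ord0 + (codeK B (fun i => k (lift ord0 i))) * B)%N.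
  move=> k; rewrite /codeK big_ord_recl /= expn0 muln1 big_distrl /=; congr (_ + _)%N.
  by apply: eq_bigr => i _; rewrite /bump /= add1n expnS mulnCA mulnA [(_ * B)%N]mulnC -mulnA.
rewrite !split in e.
have e0 : k1 ord0 = k2 ord0.
  have := congr1 (fun x => x %% B)%N e => /=.
  by rewrite ![(_ + _ * B)%N]addnC !modnMDl !modn_small.
have e1 : codeK B (fun i => k1 (lift ord0 i)) = codeK B (fun i => k2 (lift ord0 i)).
  by move: e; rewrite e0 => /addnI /eqP; rewrite eqn_mul2r gtn_eqF //= => /eqP.
case: (unliftP ord0 c) => [j ->|->] //.
exact: (IH _ _ (fun i => h1 _) (fun i => h2 _) e1).
Qed.

Lemma count_tnth (T : eqType) m (y : m.-tuple T) (c : T) :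
  count_mem c y = (\sum_(i < m) (tnth y i == c))%N.
Proof. by rewrite -sum1_count big_tuple big_mkcond. Qed.

Definition ecode {q : nat} (B m : nat) (y : m.-tuple 'I_q) : nat := (\sum_(i < m) B ^ (tnth y i))%N.

Lemma ecodeE {q : nat} (B m : nat) (y : m.-tuple 'I_q) :
  ecode B y = codeK B (fun c => count_mem c y).
Proof.
rewrite /codeK /ecode.
under [RHS]eq_bigr do rewrite count_tnth big_distrl /=.
rewrite exchange_big /=; apply: eq_bigr => i _.
rewrite (bigD1 (tnth y i)) //= eqxx mul1n big1 ?addn0 // => c /negbTE.
by rewrite eq_sym => ->.
Qed.
Definition Pe {R : realType} {q : nat} (U : 'M[R]_q) (B : nat) (e : 'I_q) : {poly R} :=
  \sum_(c : 'I_q) U e c *: 'X^(B ^ c).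

Definition Gp {R : realType} {q : nat} (U : 'M[R]_q) (B m : nat) (z : m.-tuple 'I_q) : {poly R} :=
  \prod_(i < m) Pe U B (tnth z i).

Lemma prod_scaleX {R : realType} m (c : 'I_m -> R) (e : 'I_m -> nat) :
  \prod_(i < m) (c i *: 'X^(e i)) = (\prod_(i < m) c i) *: ('X^(\sum_(i < m) e i) : {poly R}).
Proof.
elim: m c e => [|m IH] c e; first by rewrite !big_ord0 scale1r expr0.
rewrite !big_ord_recr /= IH exprD -scalerAl -scalerAr scalerA //.
Qed.

Lemma Gp_expand {R : realType} {q : nat} (U : 'M[R]_q) (B m : nat) (z : m.-tuple 'I_q) :
  Gp U B z = \sum_(y : m.-tuple 'I_q) chan_prob U z y *: 'X^(ecode B y).
Proof.
rewrite /Gp /Pe bigA_distr_bigA /=.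
rewrite (reindex (fun y : m.-tuple 'I_q => [ffun i => tnth y i])) /=; last first.
  exists (fun f : {ffun 'I_m -> 'I_q} => [tuple f i | i < m]) => [y _|f _].
    by apply: eq_from_tnth => i; rewrite tnth_mktuple ffunE.
  by apply/ffunP => i; rewrite ffunE tnth_mktuple.
apply: eq_bigr => y _; rewrite prod_scaleX /chan_prob /ecode.
by under eq_bigr do rewrite ffunE; under [X in _ *: 'X^X]eq_bigr do rewrite ffunE.
Qed.

Lemma W_coef {R : realType} {q : nat} (U : 'M[R]_q) (B m : nat) (z : m.-tuple 'I_q) (k : 'I_q -> nat) :
  (m < B)%N -> (forall c, k c <= m)%N -> W U z k = (Gp U B z)`_(codeK B k).
Proof.
move=> hmB hk.
rewrite Gp_expand coef_sum /W big_mkcond /=; apply: eq_bigr => y _.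
rewrite coefZ coefXn ecodeE.
have -> : [forall c, composition y c == k c] = (codeK B (fun c => count_mem c y) == codeK B k).
  apply/forallP/eqP => [h|h].
    by rewrite /codeK; apply: eq_bigr => c _; rewrite -(eqP (h c)).
  move=> c; apply/eqP; apply: (codeK_inj (B:=B)) h c => //.
  - exact: leq_ltn_trans hmB.
  - move=> c; apply: (leq_ltn_trans _ hmB); rewrite -[X in (_ <= X)%N](size_tuple y).
    exact: count_size.
  - by move=> c; exact: (leq_ltn_trans (hk c) hmB).
by rewrite eq_sym; case: ifP; rewrite ?mulr1 ?mulr0.
Qed.
Lemma sum_inj_le {R : realType} (K : finType) (phi : K -> nat) (p : {poly R}) :
  injective phi -> \sum_(k : K) `|p`_(phi k)| <= norm1 p.
Proof.
move=> hinj.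
have E : forall k, `|p`_(phi k)| = \sum_(j < size p) (phi k == j)%:R * `|p`_j|.
  move=> k; case: (ltnP (phi k) (size p)) => h.
    rewrite (bigD1 (Ordinal h)) //= eqxx mul1r big1 ?addr0 // => j /negbTE hj.
    have -> : (phi k == j) = false.
      by apply/negbTE; apply: contraFN hj => /eqP e; apply/eqP/val_inj.
    by rewrite mul0r.
  rewrite nth_default // normr0 big1 // => j _.
  have -> : (phi k == j) = false by apply/negbTE; rewrite neq_ltn (leq_trans (ltn_ord j) h) orbT.
  by rewrite mul0r.
under eq_bigr do rewrite E.
rewrite exchange_big /= /norm1; apply: ler_sum => j _.
rewrite -mulr_suml -[X in _ <= X]mul1r ler_wpM2r //.
case: (pickP (fun k => phi k == j)) => [k0 hk0|hno].
  rewrite (bigD1 k0) //= hk0 big1 ?addr0 // => k hk.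
  have -> : (phi k == j) = false.
    apply/negbTE; apply: contra hk => /eqP e; apply/eqP; apply: hinj.
    by rewrite e (eqP hk0).
  by [].
by rewrite big1 ?ler01 // => k _; rewrite hno.
Qed.

Lemma dTV_le {R : realType} {q : nat} (U : 'M[R]_q) m (z z' : m.-tuple 'I_q) :
  dTV_W U z z' <= 2^-1 * norm1 (Gp U m.+1 z - Gp U m.+1 z').
Proof.
rewrite /dTV_W; apply: ler_wpM2l; first by rewrite invr_ge0 ler0n.
have hW : forall (y : m.-tuple 'I_q) (k : {ffun 'I_q -> 'I_m.+1}),
    W U y (fun c => k c) = (Gp U m.+1 y)`_(codeK m.+1 (fun c => k c)).
  by move=> y k; apply: W_coef => // c; rewrite -ltnS ltn_ord.
under eq_bigr do rewrite !hW -coefB.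
apply: (sum_inj_le (phi := fun k : {ffun 'I_q -> 'I_m.+1} => codeK m.+1 (fun c => k c))).
  move=> k1 k2 e; apply/ffunP => c; apply: val_inj.
  by apply: (codeK_inj _ _ _ e) => // i; exact: ltn_ord.
Qed.
Lemma Gp_rcons {R : realType} {q : nat} (U : 'M[R]_q) B n (x : n.-tuple 'I_q) (a : 'I_q) :
  Gp U B [tuple of rcons x a] = Gp U B x * Pe U B a.
Proof.
rewrite /Gp big_ord_recr /=; congr (_ * _).
  apply: eq_bigr => i _; congr (Pe U B _).
  by rewrite (tnth_nth a) (tnth_nth a) /= nth_rcons size_tuple ltn_ord.
by rewrite (tnth_nth a) /= nth_rcons size_tuple ltnn eqxx.
Qed.

Lemma min_pos {R : realType} {q : nat} (U : 'M[R]_q) :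
  (forall i j, 0 < U i j) -> (forall i, \sum_j U i j = 1) ->
  exists mu : R, 0 < mu /\ forall i j, mu <= U i j.
Proof.
move=> hpos hrow.
have U1 : forall i j, U i j <= 1.
  move=> i j; rewrite -(hrow i) (bigD1 j) //= lerDl; apply: sumr_ge0 => k _; exact: ltW.
exists (\prod_(i : 'I_q) \prod_(j : 'I_q) U i j); split.
  by apply: prodr_gt0 => i _; apply: prodr_gt0 => j _.
move=> i j; rewrite (bigD1 i) //= (bigD1 j) //= -mulrA.
apply: ler_piMr; first exact: ltW.
apply: mulr_ile1.
- by apply: prodr_ge0 => k _; exact: ltW.
- by apply: prodr_ge0 => k _; apply: prodr_ge0 => l _; exact: ltW.
- by apply: prodr_ile1 => k _; rewrite ltW //= U1.
- apply: prodr_ile1 => k _; rewrite prodr_ge0 /=; last by move=> l _; exact: ltW.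
  by apply: prodr_ile1 => l _; rewrite ltW //= U1.
Qed.

Lemma poly_bound {R : realType} {q : nat} (U : 'M[R]_q) (mu t : R) B n (x : n.-tuple 'I_q) (a b : 'I_q) :
  0 < mu -> 0 < t -> (forall i j, mu <= U i j) -> (forall i, \sum_j U i j = 1) ->
  norm1 (Gp U B x * (Pe U B a - Pe U B b)) <= 2 * (t * ((n.+1)%:R * mu)^-1 + t^-1).
Proof.
move=> hmu ht hmin hrow.
set K := t * ((n.+1)%:R * mu)^-1 + t^-1.
have hK : forall c : 'I_q, norm1 (('X^(B ^ c) - 'X^(B ^ a)) * Gp U B x) <= K.
  move=> c.
  have -> : Gp U B x = \prod_(i < n) Pe U B (nth a x i).
    by apply: eq_bigr => i _; rewrite (tnth_nth a).
  have := @main_poly R n (mu / 2) t (B ^ c) (B ^ a) (fun i => Pe U B (nth a x i)).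
  rewrite (_ : 2 * (mu / 2) = mu); last by field.
  apply.
  - by rewrite divr_gt0.
  - exact: ht.
  - move=> i.
    have -> : Pe U B (nth a x i) - (mu / 2) *: ('X^(B ^ c) + 'X^(B ^ a)) =
       \sum_(e : 'I_q) (U (nth a x i) e - (mu / 2) * (e == c)%:R - (mu / 2) * (e == a)%:R) *: 'X^(B ^ e).
      rewrite /Pe scalerDr.
      under [RHS]eq_bigr do rewrite !scalerBl.
      rewrite !sumrB opprD addrA; congr (_ - _ - _).
        rewrite (bigD1 c) //= eqxx mulr1 big1 ?addr0 // => e /negbTE ->; by rewrite mulr0 scale0r.
      rewrite (bigD1 a) //= eqxx mulr1 big1 ?addr0 // => e /negbTE ->; by rewrite mulr0 scale0r.
    apply: nonneg_sum => e _; apply: nonnegZX.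
    have := hmin (nth a x i) e.
    by case: (e == c); case: (e == a); rewrite ?mulr0 ?mulr1 => h; lra.
  - move=> i; rewrite /Pe horner_sum -[RHS](hrow (nth a x i)); apply: eq_bigr => e _.
    by rewrite hornerZ hornerXn expr1n mulr1.
have -> : Gp U B x * (Pe U B a - Pe U B b) =
    \sum_(c : 'I_q) (U a c - U b c) *: (('X^(B ^ c) - 'X^(B ^ a)) * Gp U B x).
  have hD : \sum_(c : 'I_q) (U a c - U b c) = 0 by rewrite sumrB !hrow subrr.
  under [RHS]eq_bigr do rewrite mulrBl scalerBr.
  rewrite sumrB -scaler_suml hD scale0r subr0 /Pe -sumrB mulr_sumr.
  apply: eq_bigr => c _; by rewrite -scalerBl -scalerAr mulrC.
apply: (le_trans (norm1_sum _ _ _)).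
apply: (le_trans (y := \sum_(c : 'I_q) (U a c + U b c) * K)).
  apply: ler_sum => c _; rewrite norm1Z; apply: ler_pM => //; first exact: norm1_ge0.
  apply: (le_trans (ler_normB _ _)).
  by rewrite !ger0_norm ?(ltW (hpos _ _)) // ltW // (lt_le_trans hmu (hmin _ _)).
by rewrite -mulr_suml big_split /= !hrow.
Qed.
Unset Implicit Arguments.
Theorem lemma4 (R : realType) (q : nat) (U : 'M[R]_q) :
  (2 <= q)%N ->
  (forall i j, 0 < U i j) ->
  (forall i, \sum_j U i j = 1) ->
  exists C3 : R, exists N : nat, forall n : nat, (N <= n)%N ->
    forall (x : n.-tuple 'I_q) (a b : 'I_q), a != b ->
      dTV_W U [tuple of rcons x a] [tuple of rcons x b]
        <= C3 * (log2 (n%:R : R)) `^ ((q%:R - 2) / 2) / Num.sqrt (n%:R).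
Proof.
move=> hq hpos hrow.
have [mu [hmu hmin]] := min_pos hpos hrow.
exists (mu^-1 + 1), 2%N => n hn x a b _.
have hn0 : (0 < n%:R :> R) by rewrite ltr0n (leq_trans _ hn).
set s := Num.sqrt (n%:R : R).
have hs : 0 < s by rewrite sqrtr_gt0.
have hss : s ^+ 2 = n%:R by rewrite sqr_sqrtr // ltW.
apply: (le_trans (dTV_le _ _ _)).
rewrite !Gp_rcons -mulrBr.
apply: (le_trans (ler_wpM2l _ (poly_bound (t := s) _ x a b hmu hs hmin hrow))).
  by rewrite invr_ge0 ler0n.
have hL : 1 <= log2 (n%:R : R) `^ ((q%:R - 2) / 2).
  have h1 : 1 <= log2 (n%:R : R).
    have h2 : 0 < ln (2 : R) by apply: ln_gt0; rewrite ltr1n.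
    rewrite /log2 ler_pdivlMr // mul1r ler_ln ?posrE ?ltr0n ?ler_nat //; exact: ltnW hn.
  have he : 0 <= (q%:R - 2) / 2 :> R.
    by rewrite divr_ge0 // subr_ge0 (ler_nat R 2 q).
  by have := ler_powR h1 he; rewrite powRr0.
rewrite [X in X <= _]mulrA mulVf ?pnatr_eq0 // mul1r.
apply: (le_trans (y := (mu^-1 + 1) / s)).
  have -> : (n.+1)%:R = s ^+ 2 + 1 :> R by rewrite hss natr1.
  rewrite -subr_ge0.
  have -> : (mu^-1 + 1) / s - (s * ((s ^+ 2 + 1) * mu)^-1 + s^-1) = (s * ((s ^+ 2 + 1) * mu))^-1.
    field; rewrite !gt_eqF //; by rewrite addr_gt0 ?exprn_gt0 ?ltr01.
  rewrite invr_ge0; apply: mulr_ge0; [exact: ltW | apply: mulr_ge0; [apply: addr_ge0; [exact: exprn_ge0 (ltW hs) | exact: ler01] | exact: ltW]].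
rewrite ler_pM2r ?invr_gt0 //.
rewrite -[X in X <= _]mulr1 ler_pM2l //.
by rewrite addr_gt0 ?invr_gt0 ?ltr01.
Qed.
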